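(* Let $(R,\mathfrak m)$ be a Noetherian local ring of prime characteristic $p$ satisfying $(0:\mathfrak m^p)_R:=\{x\in R\mid \mathfrak m^p x=0\}\not\subseteq \mathfrak m^p$. Let $L_\bullet$ be a complex of finitely generated free $R$-modules whose differentials, written as matrices with respect to bases, have all entries in $\mathfrak m$. Then for every $r\ge 1$ and every integer $j$, $$H_j(L_\bullet\otimes_R {}^{\phi^r}\!R)=0 \iff L_j=0.$$
   Context: $\phi:R\to R$ denotes the Frobenius homomorphism $\phi(a)=a^p$. For $r\ge 1$, ${}^{\phi^r}\!R$ denotes the ring $R$ regarded as an $R$-module via $\phi^r$, i.e. $a\cdot b=a^{p^r}b$ for $a\in R$, $b\in {}^{\phi^r}\!R$. *)

(* Defs.v *)
From mathcomp Require Import all_boot all_algebra.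
Set Implicit Arguments. Unset Strict Implicit. Unset Printing Implicit Defensive.
Import GRing.Theory.
Local Open Scope ring_scope.

Definition is_ideal (R : comRingType) (I : R -> Prop) : Prop :=
  [/\ I 0, (forall x y, I x -> I y -> I (x + y)) & (forall a x, I x -> I (a * x))].

Definition fin_gen_ideal (R : comRingType) (I : R -> Prop) : Prop :=
  exists (n : nat) (g : 'I_n -> R),
    forall x, I x <-> exists c : 'I_n -> R, x = \sum_(i < n) c i * g i.

Definition noetherian_ring (R : comRingType) : Prop :=
  forall I : R -> Prop, is_ideal I -> fin_gen_ideal I.

(* Local ring: the non-units form an ideal (R is nontrivial since it is a nzRing);
   this ideal is then the unique maximal ideal m. *)
Definition local_ring (R : comUnitRingType) : Prop :=
  forall x y : R, x \notin GRing.unit -> y \notin GRing.unit -> x + y \notin GRing.unit.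

Definition maxid (R : comUnitRingType) (x : R) : Prop := x \notin GRing.unit.

Definition ideal_pow (R : comRingType) (I : R -> Prop) (k : nat) (x : R) : Prop :=
  exists (n : nat) (a : 'I_n -> 'I_k -> R) (c : 'I_n -> R),
    (forall i j, I (a i j)) /\ x = \sum_(i < n) c i * \prod_(j < k) a i j.

(* the matrix of a differential after base change along phi^r : a |-> a^(p^r) *)
Definition frob_mx (R : comRingType) (p r : nat) (m n : nat) (A : 'M[R]_(m, n)) :
  'M[R]_(m, n) := map_mx (fun a => a ^+ (p ^ r)) A.

(* Complex L_j = R^(n j) (row vectors), with differential d_{j+1} : L_{j+1} -> L_j
   given by v |-> v *m D j.  Homology at index j+1 of L tensor ^{phi^r}R vanishes: *)
Definition frob_homology_vanishes (R : comRingType) (p r : nat) (n : int -> nat)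
  (D : forall j : int, 'M[R]_(n (j + 1), n j)) (j : int) : Prop :=
  forall v : 'rV[R]_(n (j + 1)), v *m frob_mx p r (D j) = 0 ->
    exists w : 'rV[R]_(n (j + 1 + 1)), v = w *m frob_mx p r (D (j + 1)).

(* Main.v *)
Require Import Defs.
From mathcomp Require Import all_boot all_algebra.
Local Open Scope ring_scope.
Import GRing.Theory.

Lemma pow_in_mp (R : comUnitRingType) (p r : nat) (a : R) :
  (0 < p)%N -> (1 <= r)%N -> maxid a ->
  exists c : R, a ^+ (p ^ r) = c * \prod_(j0 < p) a.
Proof.
move=> p0 r1 _.
have hle : (p <= p ^ r)%N by rewrite -{1}(expn1 p) leq_pexp2l.
exists (a ^+ (p ^ r - p)).
by rewrite prodr_const card_ord -exprD subnK.
Qed.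

Theorem mainTheorem2 (R : comUnitRingType) (p : nat)
  (hp : prime p) (hchar : p \in [pchar R])
  (hnoeth : noetherian_ring R) (hloc : local_ring R)
  (hann : exists x : R, (forall y, ideal_pow (@maxid R) p y -> y * x = 0) /\
                        ~ ideal_pow (@maxid R) p x)
  (n : int -> nat) (D : forall j : int, 'M[R]_(n (j + 1), n j))
  (hcx : forall j : int, D (j + 1) *m D j = 0)
  (hmin : forall (j : int) i k, maxid (D j i k)) :
  forall (r : nat), (1 <= r)%N ->
  forall j : int, frob_homology_vanishes p r D j <-> n (j + 1) = 0%N.
Proof.
move=> r r1 j; split; last first.
  move=> h v _; exists 0; rewrite mul0mx.
  by apply/matrixP => a [b hb]; exfalso; move: hb; rewrite h.
move=> hv; apply/eqP; rewrite -leqn0 leqNgt; apply/negP => hpos.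
have p0 := prime_gt0 hp.
case: hann => x [hx hnx].
set i := Ordinal hpos.
pose v : 'rV[R]_(n (j + 1)) := \row_l (if l == i then x else 0).
have hv0 : v *m frob_mx p r (D j) = 0.
  apply/matrixP => a b; rewrite !mxE big1 // => l _.
  rewrite !mxE; case: (l == i); last by rewrite mul0r.
  rewrite mulrC; apply: hx.
  have [c hc] := pow_in_mp _ _ _ _ p0 r1 (hmin j l b).
  exists 1%N, (fun _ _ => D j l b), (fun _ => c); split => //.
  by rewrite big_ord1.
have [w hw] := hv v hv0.
apply: hnx.
have hxi : x = (w *m frob_mx p r (D (j + 1))) 0 i by rewrite -hw mxE eqxx.
rewrite hxi mxE.
have hle : (p <= p ^ r)%N by rewrite -{1}(expn1 p) leq_pexp2l.
exists (n (j + 1 + 1)), (fun l _ => D (j+1) l i),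
  (fun l => w 0 l * D (j+1) l i ^+ (p ^ r - p)); split.
  by move=> *; apply: hmin.
apply: eq_bigr => l _; rewrite mxE -mulrA.
by rewrite prodr_const card_ord -exprD subnK.
Qed.
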